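(* Let $\mathcal K$ be a tame topological Kuranishi atlas with a reduction $\mathcal V=\bigsqcup_I V_I$ and a nested reduction $\mathcal C\sqsubset\mathcal V$. Let $\sigma=(\sigma_I:V_I\to\mathbb E_I)_{I\in\mathcal I_{\mathcal K}}$ be a family of continuous maps with $\mathrm{pr}_I\circ\sigma_I=\mathrm{id}_{V_I}$ (for instance $\sigma_I=\mathfrak s_I|_{V_I}+\nu_I$ for a compatible perturbation $\nu_I$ when the fibres carry a continuous addition) such that $$\widehat\Phi_{IJ}\circ\sigma_I=\sigma_J\circ\phi_{IJ}\ \text{ on } V_I\cap U_{IJ}\cap\phi_{IJ}^{-1}(V_J)\quad\text{for all } I\subsetneq J,$$ $$\sigma_I^{-1}(0_I):=\{x\in V_I:\sigma_I(x)=0_I(x)\}\subset\pi_{\mathcal K}^{-1}(\pi_{\mathcal K}(\mathcal C))\cap V_I\quad\text{for all } I.$$ Let $\mathcal Z:=\bigsqcup_I\{I\}\times\sigma_I^{-1}(0_I)$ and let $|\mathcal Z|$ be its quotient by the equivalence relation generated by $(I,x)\sim(J,\phi_{IJ}(x))$ whenever $I\subset J$, $x\in U_{IJ}$, and both $(I,x)$ and $(J,\phi_{IJ}(x))$ lie in $\mathcal Z$, equipped with the quotient topology. Then $|\mathcal Z|$ is a sequentially compact Hausdorff space.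
   Context: Notation: for subsets $V'\subset V$ of a topological space, $V'\sqsubset V$ means the closure of $V'$ in $V$ is compact. $X$ is a compact metrizable space. Charts: a topological Kuranishi chart for $X$ with open footprint $F\subset X$ is a tuple $\mathbf K=(U,\mathbb E,\mathfrak s,\psi)$ where $U$ is a separable, locally compact, metrizable space; $\mathbb E$ is a separable, locally compact, metrizable space with continuous maps $\mathrm{pr}:\mathbb E\to U$ and $0:U\to\mathbb E$ with $\mathrm{pr}\circ0=\mathrm{id}_U$; $\mathfrak s:U\to\mathbb E$ is continuous with $\mathrm{pr}\circ\mathfrak s=\mathrm{id}_U$; and $\psi$ is a homeomorphism from $\mathfrak s^{-1}(0):=\{x\in U:\mathfrak s(x)=0(x)\}$ onto $F$. Coordinate changes: for charts $\mathbf K_I,\mathbf K_J$ with $F_I\cap F_J\neq\emptyset$, a coordinate change $\widehat\Phi_{IJ}:\mathbf K_I\to\mathbf K_J$ consists of an open set $U_{IJ}\subset U_I$ with $U_{IJ}\cap\mathfrak s_I^{-1}(0_I)=\psi_I^{-1}(F_I\cap F_J)$ and a topological embedding $\widehat\Phi_{IJ}:\mathrm{pr}_I^{-1}(U_{IJ})\to\mathbb E_J$ such that there is a topological embedding $\phi_{IJ}:U_{IJ}\to U_J$ with $\mathrm{pr}_J\circ\widehat\Phi_{IJ}=\phi_{IJ}\circ\mathrm{pr}_I$, $0_J\circ\phi_{IJ}=\widehat\Phi_{IJ}\circ0_I$ and $\mathfrak s_J\circ\phi_{IJ}=\widehat\Phi_{IJ}\circ\mathfrak s_I$ on $U_{IJ}$,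 and $\phi_{IJ}=\psi_J^{-1}\circ\psi_I$ on $U_{IJ}\cap\mathfrak s_I^{-1}(0_I)$. Atlases: a covering family of basic charts is a finite family $(\mathbf K_i)_{i=1,\dots,N}$ of charts whose footprints cover $X$; $\mathcal I_{\mathcal K}$ is the set of nonempty $I\subset\{1,\dots,N\}$ with $F_I:=\bigcap_{i\in I}F_i\neq\emptyset$. Transition data consist of a chart $\mathbf K_J$ with footprint $F_J$ for each $J\in\mathcal I_{\mathcal K}$ with $|J|\ge2$ (and $\mathbf K_{\{i\}}:=\mathbf K_i$), and a coordinate change $\widehat\Phi_{IJ}:\mathbf K_I\to\mathbf K_J$ for all $I\subsetneq J$ in $\mathcal I_{\mathcal K}$. We set $U_{II}:=U_I$, $\phi_{II}:=\mathrm{id}_{U_I}$. For $I\subsetneq J\subsetneq K$ let $U_{IJK}:=U_{IJ}\cap\phi_{IJ}^{-1}(U_{JK})$. The triple satisfies the weak cocycle condition if $\widehat\Phi_{JK}\circ\widehat\Phi_{IJ}=\widehat\Phi_{IK}$ on $\mathrm{pr}_I^{-1}(U_{IJK}\cap U_{IK})$; the cocycle condition if in addition $U_{IJK}\subset U_{IK}$; the strong cocycle condition if in addition $U_{IJK}=U_{IK}$. A weak topological Kuranishi atlas $\mathcal K$ is a covering family with transition data satisfying the weak cocycle condition for all such triples; a topological Kuranishi atlas is one satisfying the cocycle condition for all triples. Filtrations: a weak topological Kuranishi atlas is filtered if it is equipped with closed subsets $\mathbb E_{IJ}\subset\mathbb E_J$ for all $J\in\mathcal I_{\mathcal K}$ and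 $I\subset J$ (including $I=\emptyset$) such that (i) $\mathbb E_{JJ}=\mathbb E_J$ and $\mathbb E_{\emptyset J}=\mathrm{im}\,0_J$; (ii) $\widehat\Phi_{JK}(\mathrm{pr}_J^{-1}(U_{JK})\cap\mathbb E_{IJ})=\mathbb E_{IK}\cap\mathrm{pr}_K^{-1}(\mathrm{im}\,\phi_{JK})$ for $I\subset J\subsetneq K$; (iii) $\mathbb E_{IJ}\cap\mathbb E_{HJ}=\mathbb E_{(I\cap H)J}$ for $I,H\subset J$; (iv) $\mathrm{im}\,\phi_{IJ}$ is an open subset of $\mathfrak s_J^{-1}(\mathbb E_{IJ})$ for $I\subsetneq J$. Tameness: a filtered weak topological Kuranishi atlas is tame if $U_{IJ}\cap U_{IK}=U_{I(J\cup K)}$ for all $I,J,K\in\mathcal I_{\mathcal K}$ with $I\subset J,K$ (where $U_{IL}:=\emptyset$ if $L\notin\mathcal I_{\mathcal K}$), and $\phi_{IJ}(U_{IK})=U_{JK}\cap\mathfrak s_J^{-1}(\mathbb E_{IJ})$ for all $I\subset J\subset K$ in $\mathcal I_{\mathcal K}$ (equalities of indices allowed). Virtual neighbourhood: for a topological Kuranishi atlas, $|\mathcal K|$ is the quotient of $\bigsqcup_{I\in\mathcal I_{\mathcal K}}U_I=\{(I,x):x\in U_I\}$ by the equivalence relation generated by $(I,x)\sim(J,\phi_{IJ}(x))$ for $I\subset J$, $x\in U_{IJ}$, with the quotient topology and projection $\pi_{\mathcal K}$; $\iota_{\mathcal K}(X):=\pi_{\mathcal K}\big(\bigsqcup_I\{I\}\times\mathfrak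 s_I^{-1}(0_I)\big)\subset|\mathcal K|$. Reductions: a reduction of a tame topological Kuranishi atlas $\mathcal K$ is a tuple $\mathcal V=\bigsqcup_{I\in\mathcal I_{\mathcal K}}V_I$ of (possibly empty) open subsets $V_I\subset U_I$ such that (i) $V_I\sqsubset U_I$ for all $I$, and $V_I\neq\emptyset$ implies $V_I\cap\mathfrak s_I^{-1}(0_I)\neq\emptyset$; (ii) if $\pi_{\mathcal K}(\overline{V_I})\cap\pi_{\mathcal K}(\overline{V_J})\neq\emptyset$ (closures in $U_I$, $U_J$) then $I\subset J$ or $J\subset I$; (iii) $\iota_{\mathcal K}(X)\subset\pi_{\mathcal K}(\mathcal V)=\bigcup_I\pi_{\mathcal K}(V_I)$. A nested reduction is a pair of reductions $\mathcal C\sqsubset\mathcal V$, meaning $C_I\sqsubset V_I$ for all $I$. *)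

(* Defs.v *)
From mathcomp Require Import all_boot.
From Stdlib Require Import Reals List Relations FunctionalExtensionality PropExtensionality.

Set Implicit Arguments.
Unset Strict Implicit.
Unset Printing Implicit Defensive.

Record Top := mkTop {
  pt :> Type;
  isOpen : (pt -> Prop) -> Prop;
  open_full : isOpen (fun _ => True);
  open_inter : forall A B, isOpen A -> isOpen B -> isOpen (fun x => A x /\ B x);
  open_union : forall Fam : (pt -> Prop) -> Prop,
      (forall A, Fam A -> isOpen A) -> isOpen (fun x => exists A, Fam A /\ A x)
}.
Arguments isOpen {t} _.

Definition isClosed {T : Top} (A : T -> Prop) : Prop := isOpen (fun x => ~ A x).

Definition closure {T : Top} (A : T -> Prop) : T -> Prop :=
  fun x => forall O, isOpen O -> O x -> exists y, O y /\ A y.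

Definition compact {T : Top} (K : T -> Prop) : Prop :=
  forall Fam : (T -> Prop) -> Prop,
    (forall O, Fam O -> isOpen O) ->
    (forall x, K x -> exists O, Fam O /\ O x) ->
    exists l : list (T -> Prop),
      (forall O, In O l -> Fam O) /\ (forall x, K x -> exists O, In O l /\ O x).

(* A ⊏ B : A ⊂ B and the closure of A in B (= closure in T intersected
   with B) is compact. *)
Definition rel_compact {T : Top} (A B : T -> Prop) : Prop :=
  (forall x, A x -> B x) /\ compact (fun x => B x /\ closure A x).

Definition continuous {T S : Top} (f : T -> S) : Prop :=
  forall O, isOpen O -> isOpen (fun x => O (f x)).

Definition continuous_on {T S : Top} (A : T -> Prop) (f : T -> S) : Prop :=
  forall O, isOpen O -> exists W, isOpen W /\ forall x, A x -> (O (f x) <-> W x).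

Definition embedding_on {T S : Top} (A : T -> Prop) (f : T -> S) : Prop :=
  continuous_on A f /\
  (forall x y, A x -> A y -> f x = f y -> x = y) /\
  (forall W, isOpen W -> exists O, isOpen O /\ forall x, A x -> (W x <-> O (f x))).

Definition homeo_onto {T S : Top} (A : T -> Prop) (f : T -> S) (B : S -> Prop) : Prop :=
  embedding_on A f /\ (forall y, B y <-> exists x, A x /\ f x = y).

Definition metrizable (T : Top) : Prop :=
  exists d : T -> T -> R,
    (forall x y, d x y = 0%R <-> x = y) /\
    (forall x y, d x y = d y x) /\
    (forall x y z, (d x z <= d x y + d y z)%R) /\
    (forall O : T -> Prop, isOpen O <->
       (forall x, O x -> exists eps, (0 < eps)%R /\ forall y, (d x y < eps)%R -> O y)).

Definition separable (T : Top) : Prop :=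
  exists D : nat -> option T,
    forall O : T -> Prop, isOpen O -> (exists x, O x) -> exists n x, D n = Some x /\ O x.

Definition locally_compact (T : Top) : Prop :=
  forall x : T, exists O K, isOpen O /\ O x /\ (forall y, O y -> K y) /\ compact K.

Definition hausdorff (T : Top) : Prop :=
  forall x y : T, x <> y -> exists O1 O2, isOpen O1 /\ isOpen O2 /\ O1 x /\ O2 y /\
     (forall z, O1 z -> O2 z -> False).

Definition converges {T : Top} (u : nat -> T) (l : T) : Prop :=
  forall O, isOpen O -> O l -> exists n0, forall n, (n0 <= n)%N -> O (u n).

Definition seq_compact (T : Top) : Prop :=
  forall u : nat -> T, exists (g : nat -> nat) (l : T),
    (forall n, (g n < g n.+1)%N) /\ converges (fun n => u (g n)) l.

Section Constructions.

Definition sumOpen (I : Type) (T : I -> Top) (W : {i : I & T i} -> Prop) : Prop :=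
  forall i, isOpen (fun x : T i => W (existT _ i x)).

Lemma sum_full (I : Type) (T : I -> Top) : sumOpen (fun _ : {i : I & T i} => True).
Proof. intro i; exact (open_full (T i)). Qed.
Lemma sum_inter (I : Type) (T : I -> Top) (A B : {i : I & T i} -> Prop) :
  sumOpen A -> sumOpen B -> sumOpen (fun x => A x /\ B x).
Proof. intros HA HB i; exact (open_inter (HA i) (HB i)). Qed.
Lemma sum_union (I : Type) (T : I -> Top) (Fam : ({i : I & T i} -> Prop) -> Prop) :
  (forall A, Fam A -> sumOpen A) -> sumOpen (fun x => exists A, Fam A /\ A x).
Proof.
  intros H i.
  pose (G := fun B : T i -> Prop => exists A, Fam A /\ B = fun x => A (existT _ i x)).
  have HG : isOpen (fun x : T i => exists B, G B /\ B x).
  { apply open_union. intros B [A [HA ->]]. exact (H A HA i). }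
  have E : (fun x : T i => exists A, Fam A /\ A (existT _ i x)) =
           (fun x : T i => exists B, G B /\ B x).
  { apply: functional_extensionality => x.
    apply: propositional_extensionality. split.
    - intros [A [HA Hx]]. exists (fun x => A (existT _ i x)). split; [exists A; auto|exact Hx].
    - intros [B [[A [HA ->]] Hx]]. exists A. auto. }
  simpl. rewrite E. exact HG.
Qed.

Definition sumTop (I : Type) (T : I -> Top) : Top :=
  @mkTop {i : I & T i} (@sumOpen I T) (@sum_full I T) (@sum_inter I T) (@sum_union I T).

Definition subOpen (T : Top) (P : T -> Prop) (W : {x : T | P x} -> Prop) : Prop :=
  exists O, isOpen O /\ forall y, W y <-> O (proj1_sig y).

Lemma sub_full (T : Top) (P : T -> Prop) : subOpen (fun _ : {x : T | P x} => True).
Proof. exists (fun _ => True). split; [exact (open_full T)|tauto]. Qed.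
Lemma sub_inter (T : Top) (P : T -> Prop) (A B : {x : T | P x} -> Prop) :
  subOpen A -> subOpen B -> subOpen (fun x => A x /\ B x).
Proof.
  intros [OA [HA EA]] [OB [HB EB]]. exists (fun x => OA x /\ OB x).
  split; [exact (open_inter HA HB)|]. intro y. rewrite EA EB. tauto.
Qed.
Lemma sub_union (T : Top) (P : T -> Prop) (Fam : ({x : T | P x} -> Prop) -> Prop) :
  (forall A, Fam A -> subOpen A) -> subOpen (fun x => exists A, Fam A /\ A x).
Proof.
  intros H.
  pose (G := fun O : T -> Prop => isOpen O /\
               forall y : {x : T | P x}, O (proj1_sig y) -> exists A, Fam A /\ A y).
  exists (fun x => exists O, G O /\ O x). split.
  - apply open_union. intros O [HO _]. exact HO.
  - intro y. split.
    + intros [A [HA Ay]]. destruct (H A HA) as [OA [HOA EA]].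
      exists OA. split; [|apply EA; exact Ay].
      split; [exact HOA|]. intros y' Hy'. exists A. split; [exact HA|apply EA; exact Hy'].
    + intros [O [[_ HO] Oy]]. exact (HO y Oy).
Qed.

Definition subTop (T : Top) (P : T -> Prop) : Top :=
  @mkTop {x : T | P x} (@subOpen T P) (@sub_full T P) (@sub_inter T P) (@sub_union T P).

Definition quot_carrier (T : Top) (Rel : T -> T -> Prop) : Type :=
  {S : T -> Prop | exists t, S = clos_refl_sym_trans T Rel t}.

Definition quot_proj (T : Top) (Rel : T -> T -> Prop) (t : T) : quot_carrier Rel :=
  exist _ (clos_refl_sym_trans T Rel t) (ex_intro _ t erefl).

Definition quotOpen (T : Top) (Rel : T -> T -> Prop) (A : quot_carrier Rel -> Prop) : Prop :=
  isOpen (fun t : T => A (quot_proj Rel t)).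

Lemma quot_full (T : Top) (Rel : T -> T -> Prop) : quotOpen (fun _ : quot_carrier Rel => True).
Proof. exact (open_full T). Qed.
Lemma quot_inter (T : Top) (Rel : T -> T -> Prop) (A B : quot_carrier Rel -> Prop) :
  quotOpen A -> quotOpen B -> quotOpen (fun x => A x /\ B x).
Proof. intros HA HB. exact (open_inter HA HB). Qed.
Lemma quot_union (T : Top) (Rel : T -> T -> Prop) (Fam : (quot_carrier Rel -> Prop) -> Prop) :
  (forall A, Fam A -> quotOpen A) -> quotOpen (fun x => exists A, Fam A /\ A x).
Proof.
  intros H.
  pose (G := fun B : T -> Prop => exists A, Fam A /\ B = fun t => A (quot_proj Rel t)).
  have HG : isOpen (fun t : T => exists B, G B /\ B t).
  { apply open_union. intros B [A [HA ->]]. exact (H A HA). }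
  have E : (fun t : T => exists A, Fam A /\ A (quot_proj Rel t)) =
           (fun t : T => exists B, G B /\ B t).
  { apply: functional_extensionality => x.
    apply: propositional_extensionality. split.
    - intros [A [HA Hx]]. exists (fun t => A (quot_proj Rel t)). split; [exists A; auto|exact Hx].
    - intros [B [[A [HA ->]] Hx]]. exists A. auto. }
  unfold quotOpen. rewrite E. exact HG.
Qed.

Definition quotTop (T : Top) (Rel : T -> T -> Prop) : Top :=
  @mkTop (quot_carrier Rel) (@quotOpen T Rel) (@quot_full T Rel) (@quot_inter T Rel)
         (@quot_union T Rel).

End Constructions.

Definition zero_set {U E : Top} (s z : U -> E) : U -> Prop := fun x => s x = z x.

(* (U, E, pr, 0, s, psi) is a topological Kuranishi chart for X with open
   footprint Fp *)
Definition is_top_chart (X U E : Top) (pr : E -> U) (z s : U -> E) (psi : U -> X)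
    (Fp : X -> Prop) : Prop :=
  isOpen Fp /\
  separable U /\ locally_compact U /\ metrizable U /\
  separable E /\ locally_compact E /\ metrizable E /\
  continuous pr /\ continuous z /\ (forall x, pr (z x) = x) /\
  continuous s /\ (forall x, pr (s x) = x) /\
  homeo_onto (zero_set s z) psi Fp.

Unset Implicit Arguments.
Section Atlas.
Variables (X : Top) (N : nat) (F : 'I_N -> X -> Prop).

Definition footprint (I : {set 'I_N}) : X -> Prop := fun x => forall i, i \in I -> F i x.

Definition inIK (I : {set 'I_N}) : Prop := I != set0 /\ exists x, footprint I x.

Variables (U E : {set 'I_N} -> Top)
  (pr : forall I, E I -> U I) (z s : forall I, U I -> E I) (psi : forall I, U I -> X)
  (UIJ : forall I J : {set 'I_N}, U I -> Prop) (phi : forall I J, U I -> U J)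
  (Phi : forall I J, E I -> E J).

Definition is_coord_change (I J : {set 'I_N}) : Prop :=
  isOpen (UIJ I J) /\
  (forall x, (UIJ I J x /\ zero_set (s I) (z I) x) <->
             (zero_set (s I) (z I) x /\ footprint I (psi I x) /\ footprint J (psi I x))) /\
  embedding_on (fun e => UIJ I J (pr I e)) (Phi I J) /\
  embedding_on (UIJ I J) (phi I J) /\
  (forall e, UIJ I J (pr I e) -> pr J (Phi I J e) = phi I J (pr I e)) /\
  (forall x, UIJ I J x -> z J (phi I J x) = Phi I J (z I x)) /\
  (forall x, UIJ I J x -> s J (phi I J x) = Phi I J (s I x)) /\
  (forall x, UIJ I J x -> zero_set (s I) (z I) x ->
      zero_set (s J) (z J) (phi I J x) /\ psi J (phi I J x) = psi I x).

Definition is_top_atlas : Prop :=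
  (forall x, exists i, F i x) /\
  (forall i, isOpen (F i)) /\
  (forall (I : {set 'I_N}), inIK I -> is_top_chart (pr I) (z I) (s I) (psi I) (footprint I)) /\
  (forall (I : {set 'I_N}) x, UIJ I I x) /\ (forall (I : {set 'I_N}) x, phi I I x = x) /\
  (forall (I J : {set 'I_N}), inIK I -> inIK J -> I \proper J -> is_coord_change I J) /\
  (forall (I J K : {set 'I_N}), inIK I -> inIK J -> inIK K -> I \proper J -> J \proper K ->
     (forall e, UIJ I J (pr I e) -> UIJ J K (phi I J (pr I e)) -> UIJ I K (pr I e) ->
        Phi J K (Phi I J e) = Phi I K e) /\
     (forall x, UIJ I J x -> UIJ J K (phi I J x) -> UIJ I K x)).

Variable (EE : forall I J : {set 'I_N}, E J -> Prop).   (* EE I J = E_{IJ} ⊂ E_J *)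

Definition is_filtration : Prop :=
  (forall (I J : {set 'I_N}), inIK J -> I \subset J -> isClosed (EE I J)) /\
  (forall (J : {set 'I_N}), inIK J -> forall e, EE J J e) /\
  (forall (J : {set 'I_N}), inIK J -> forall e, EE set0 J e <-> exists u, z J u = e) /\
  (forall (I J K : {set 'I_N}), inIK J -> inIK K -> I \subset J -> J \proper K ->
     forall y, (exists e, UIJ J K (pr J e) /\ EE I J e /\ Phi J K e = y) <->
               (EE I K y /\ exists u, UIJ J K u /\ phi J K u = pr K y)) /\
  (forall (I H J : {set 'I_N}), inIK J -> I \subset J -> H \subset J ->
     forall e, (EE I J e /\ EE H J e) <-> EE (I :&: H) J e) /\
  (forall (I J : {set 'I_N}), inIK I -> inIK J -> I \proper J ->
     (forall u, UIJ I J u -> EE I J (s J (phi I J u))) /\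
     exists O, isOpen O /\ forall v, EE I J (s J v) ->
        (O v <-> exists u, UIJ I J u /\ phi I J u = v)).

Definition is_tame : Prop :=
  (forall (I J K : {set 'I_N}), inIK I -> inIK J -> inIK K -> I \subset J -> I \subset K ->
     forall x, (UIJ I J x /\ UIJ I K x) <-> (inIK (J :|: K) /\ UIJ I (J :|: K) x)) /\
  (forall (I J K : {set 'I_N}), inIK I -> inIK J -> inIK K -> I \subset J -> J \subset K ->
     forall y, (exists x, UIJ I K x /\ phi I J x = y) <-> (UIJ J K y /\ EE I J (s J y))).

Definition is_tame_top_atlas : Prop := is_top_atlas /\ is_filtration /\ is_tame.

Definition stepK (p q : {I : {set 'I_N} & U I}) : Prop :=
  match p, q with
  | existT I0 x, existT J0 y =>
      inIK I0 /\ inIK J0 /\ I0 \subset J0 /\ UIJ I0 J0 x /\ phi I0 J0 x = y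
  end.

(* pi_K(p) = pi_K(q) *)
Definition equivK : {I : {set 'I_N} & U I} -> {I : {set 'I_N} & U I} -> Prop :=
  clos_refl_sym_trans _ stepK.

Definition is_reduction (V : forall I, U I -> Prop) : Prop :=
  (forall (I : {set 'I_N}), inIK I ->
     isOpen (V I) /\ rel_compact (V I) (fun _ => True) /\
     ((exists x, V I x) -> exists x, V I x /\ zero_set (s I) (z I) x)) /\
  (forall (I J : {set 'I_N}), inIK I -> inIK J -> forall x y,
     closure (V I) x -> closure (V J) y -> equivK (existT _ I x) (existT _ J y) ->
     I \subset J \/ J \subset I) /\
  (forall (I : {set 'I_N}) x, inIK I -> zero_set (s I) (z I) x ->
     exists J y, inIK J /\ V J y /\ equivK (existT _ I x) (existT _ J y)).

Definition is_nested_reduction (C V : forall I, U I -> Prop) : Prop :=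
  is_reduction C /\ is_reduction V /\ (forall (I : {set 'I_N}), inIK I -> rel_compact (C I) (V I)).

Variables (V C : forall I, U I -> Prop) (sigma : forall I, U I -> E I).

Definition is_admissible_section : Prop :=
  (forall (I : {set 'I_N}), inIK I -> continuous_on (V I) (sigma I) /\
                       forall x, V I x -> pr I (sigma I x) = x) /\
  (forall (I J : {set 'I_N}), inIK I -> inIK J -> I \proper J ->
     forall x, V I x -> UIJ I J x -> V J (phi I J x) ->
       Phi I J (sigma I x) = sigma J (phi I J x)) /\
  (forall (I : {set 'I_N}), inIK I -> forall x, V I x -> sigma I x = z I x ->
     exists J c, inIK J /\ C J c /\ equivK (existT _ I x) (existT _ J c)).

Definition inZ (p : {I : {set 'I_N} & U I}) : Prop :=
  match p with existT I0 x => inIK I0 /\ V I0 x /\ sigma I0 x = z I0 x end.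

Definition ZTop : Top := @subTop (sumTop U) inZ.

Definition ZquotTop : Top :=
  @quotTop ZTop (fun a b : ZTop => stepK (proj1_sig a) (proj1_sig b)).

End Atlas.

(* Main.v *)
From Stdlib Require Import List Relations FunctionalExtensionality PropExtensionality.
From Stdlib Require Import Classical ClassicalEpsilon ProofIrrelevance Eqdep_dec.
Require Import Defs.
From mathcomp Require Import all_boot.
From Stdlib Require Import Reals Lra Lia.
Import Defs.

Set Implicit Arguments.
Unset Strict Implicit.
Unset Printing Implicit Defensive.

Definition is_metric (T : Top) (d : T -> T -> R) : Prop :=
    (forall x y, d x y = 0%R <-> x = y) /\
    (forall x y, d x y = d y x) /\
    (forall x y z, (d x z <= d x y + d y z)%R) /\
    (forall O : T -> Prop, isOpen O <->
       (forall x, O x -> exists eps, (0 < eps)%R /\ forall y, (d x y < eps)%R -> O y)).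

Lemma open_ext (T : Top) (A B : T -> Prop) : isOpen A -> (forall x, A x <-> B x) -> isOpen B.
Proof.
  move=> HA HE. have -> : B = A; last by [].
  apply: functional_extensionality => x; apply: propositional_extensionality; by rewrite HE.
Qed.

Lemma open_empty (T : Top) : isOpen (fun _ : T => False).
Proof.
  apply: (open_ext (open_union (Fam := fun _ => False) _)).
  - by move=> A [].
  - move=> x; split; [by case=> A []|by []].
Qed.

Section Metric.
Variables (T : Top) (d : T -> T -> R) (Hd : is_metric d).

Lemma d_refl x : d x x = 0%R.
Proof. by case: Hd => [H _]; apply H. Qed.

Lemma d_sym x y : d x y = d y x.
Proof. by case: Hd => [_ [H _]]. Qed.

Lemma d_tri x y z : (d x z <= d x y + d y z)%R.
Proof. by case: Hd => [_ [_ [H _]]]. Qed.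

Lemma d_nonneg x y : (0 <= d x y)%R.
Proof. have := d_tri x y x; rewrite d_refl (d_sym y x); lra. Qed.

Lemma d_eq x y : d x y = 0%R -> x = y.
Proof. by case: Hd => [H _]; apply H. Qed.

Lemma ball_open c r : isOpen (fun y => (d c y < r)%R).
Proof.
  case: Hd => [_ [_ [_ H]]]; apply/H => x Hx.
  exists (r - d c x)%R; split; first lra.
  move=> y Hy; have := d_tri c x y; lra.
Qed.

Lemma open_ball O x : isOpen O -> O x -> exists eps, (0 < eps)%R /\ forall y, (d x y < eps)%R -> O y.
Proof. case: Hd => [_ [_ [_ H]]] HO Ox. by move/H: HO => /(_ x Ox). Qed.

Lemma metric_hausdorff : hausdorff T.
Proof.
  move=> x y Hxy.
  have Hp : (0 < d x y)%R.
  { have := d_nonneg x y; case/Rle_lt_or_eq_dec => //. move=> E; exfalso; apply: Hxy; exact: d_eq. }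
  exists (fun w => (d x w < d x y / 2)%R), (fun w => (d y w < d x y / 2)%R).
  split; first exact: ball_open. split; first exact: ball_open.
  split; first by rewrite d_refl; lra. split; first by rewrite d_refl; lra.
  move=> w H1 H2. have := d_tri x w y. rewrite (d_sym w y). lra.
Qed.

Lemma conv_metric_inv u l : converges u l -> forall eps, (0 < eps)%R ->
  exists n0, forall n, (n0 <= n)%N -> (d l (u n) < eps)%R.
Proof. move=> Hc eps He. apply: (Hc (fun y => (d l y < eps)%R)); first exact: ball_open. by rewrite d_refl. Qed.

Lemma conv_metric u l : (forall n, (d l (u n) < / (INR n + 1))%R) -> converges u l.
Proof.
  move=> Hu O HO Ol. case: (open_ball HO Ol) => eps [He Hb].
  case: (archimed_cor1 _ He) => n0 [Hn0 Hpos].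
  exists n0 => n Hn. apply: Hb. apply: Rlt_trans (Hu n) _.
  apply: Rle_lt_trans _ Hn0. apply: Rinv_le_contravar; first by apply: lt_0_INR; lia.
  have : (n0 <= n)%coq_nat by apply/leP. move/le_INR. lra.
Qed.

End Metric.

Lemma conv_unique (T : Top) u (l l' : T) : hausdorff T -> converges u l -> converges u l' -> l = l'.
Proof.
  move=> HT H1 H2. apply: NNPP => Hne.
  case: (HT _ _ Hne) => O1 [O2 [HO1 [HO2 [Hl [Hl' Hdis]]]]].
  case: (H1 _ HO1 Hl) => n1 Hn1. case: (H2 _ HO2 Hl') => n2 Hn2.
  apply: (Hdis (u (maxn n1 n2))); [apply: Hn1|apply: Hn2]; by rewrite ?leq_maxl ?leq_maxr.
Qed.

Lemma conv_cont (T S : Top) (f : T -> S) u l : continuous f -> converges u l ->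
  converges (fun n => f (u n)) (f l).
Proof. move=> Hf Hc O HO Ol. exact: (Hc _ (Hf _ HO) Ol). Qed.

Lemma closed_lim (T S : Top) (f : T -> S) (Cl : S -> Prop) u l :
  continuous f -> isClosed Cl -> converges u l -> (forall n, Cl (f (u n))) -> Cl (f l).
Proof.
  move=> Hf HC Hc Hu. apply: NNPP => Hn.
  case: (Hc _ (Hf _ HC) Hn) => n0 Hn0. exact: (Hn0 n0 (leqnn _) (Hu n0)).
Qed.

Definition incr (g : nat -> nat) := forall n, (g n < g n.+1)%N.

Lemma incr_lt g : incr g -> forall m n, (m < n)%N -> (g m < g n)%N.
Proof.
  move=> Hg m n; elim: n => // n IH. rewrite ltnS leq_eqVlt => /orP [/eqP ->|H].
  - exact: Hg.
  - exact: ltn_trans (IH H) (Hg n).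
Qed.

Lemma incr_ge g : incr g -> forall n, (n <= g n)%N.
Proof. move=> Hg; elim=> // n IH. exact: leq_ltn_trans IH (Hg n). Qed.

Lemma incr_comp g h : incr g -> incr h -> incr (fun n => g (h n)).
Proof. move=> Hg Hh n. exact: incr_lt. Qed.

Lemma conv_subseq (T : Top) (u : nat -> T) l g : incr g -> converges u l ->
  converges (fun n => u (g n)) l.
Proof.
  move=> Hg Hc O HO Ol. case: (Hc _ HO Ol) => n0 Hn0. exists n0 => n Hn.
  apply: Hn0. exact: leq_trans Hn (incr_ge Hg n).
Qed.

Lemma build_subseq (P : nat -> nat -> Prop) :
  (forall k m, exists n, (m < n)%N /\ P k n) ->
  exists g, incr g /\ forall k, P k (g k).
Proof.
  move=> H.
  pose h k m := proj1_sig (constructive_indefinite_description _ (H k m)).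
  have Hh k m : (m < h k m)%N /\ P k (h k m).
  { rewrite /h; case: constructive_indefinite_description => /= n Hn; exact Hn. }
  pose fix g k := match k with 0 => h 0 0 | k'.+1 => h k (g k') end.
  exists g; split.
  - move=> n /=. by case: (Hh n.+1 (g n)).
  - case=> [|k] /=; [exact: (Hh 0 0).2 | exact: (Hh k.+1 (g k)).2].
Qed.

Lemma list_bound (A : Type) (l : seq A) (Q : A -> nat -> Prop) :
  (forall a, List.In a l -> exists n0, forall n, (n0 <= n)%N -> Q a n) ->
  exists B, forall a, List.In a l -> forall n, (B <= n)%N -> Q a n.
Proof.
  elim: l => [|a l IH] H; first by exists 0.
  case: (H a (or_introl erefl)) => n0 Hn0.
  case: IH => [b Hb|B HB]; first by apply: H; right.
  exists (maxn n0 B) => b [<-|Hb] n Hn.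
  - apply: Hn0; exact: leq_trans (leq_maxl _ _) Hn.
  - apply: HB => //; exact: leq_trans (leq_maxr _ _) Hn.
Qed.

Lemma seq_bound (A : eqType) (l : seq A) (Q : A -> nat -> Prop) :
  (forall a, a \in l -> exists n0, forall n, (n0 <= n)%N -> Q a n) ->
  exists B, forall a, a \in l -> forall n, (B <= n)%N -> Q a n.
Proof.
  elim: l => [|a l IH] H; first by exists 0.
  case: (H a (mem_head _ _)) => n0 Hn0.
  case: IH => [b Hb|B HB]; first by apply: H; rewrite in_cons Hb orbT.
  exists (maxn n0 B) => b; rewrite in_cons => /orP [/eqP ->|Hb] n Hn.
  - apply: Hn0; exact: leq_trans (leq_maxl _ _) Hn.
  - apply: HB => //; exact: leq_trans (leq_maxr _ _) Hn.
Qed.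

Lemma pigeon (T : finType) (P : nat -> T -> Prop) :
  (forall n, exists k, P n k) -> exists k g, incr g /\ forall n, P (g n) k.
Proof.
  move=> H.
  suff [k Hk] : exists k, forall m, exists n, (m < n)%N /\ P n k.
  { case: (build_subseq (P := fun _ n => P n k)) => [_ m|g [Hg Hgk]]; first exact: Hk.
    by exists k, g. }
  apply: NNPP => Hno.
  have Hb : forall k, k \in enum T -> exists n0, forall n, (n0 <= n)%N -> ~ P n k.
  { move=> k _. apply: NNPP => Hk. apply: Hno; exists k => m.
    apply: NNPP => Hm; apply: Hk; exists m.+1 => n Hn Pn. apply: Hm; by exists n. }
  case: (seq_bound Hb) => B HB. case: (H B) => k Pk.
  exact: (HB k (mem_enum _ _) B (leqnn _) Pk).
Qed.

Lemma compact_seq (T : Top) (d : T -> T -> R) (K : T -> Prop) (u : nat -> T) :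
  is_metric d -> compact K -> (forall n, K (u n)) ->
  exists g l, incr g /\ K l /\ converges (fun n => u (g n)) l.
Proof.
  move=> Hd HK Hu.
  suff [l [Kl Hl]] : exists l, K l /\ forall k m, exists n, (m < n)%N /\ (d l (u n) < / (INR k + 1))%R.
  { case: (build_subseq Hl) => g [Hg Hgk]. exists g, l; split => //; split => //.
    exact: (conv_metric Hd). }
  apply: NNPP => Hno.
  pose Fam O := exists l k m, K l /\ (forall n, (m < n)%N -> ~ (d l (u n) < / (INR k + 1))%R) /\
                 O = (fun y => (d l y < / (INR k + 1))%R).
  case: (HK Fam).
  - move=> O [l [k [m [_ [_ ->]]]]]. exact: (ball_open Hd).
  - move=> x Kx. apply: NNPP => Hx. apply: Hno. exists x; split => // k m.
    apply: NNPP => Hkm. apply: Hx. exists (fun y => (d x y < / (INR k + 1))%R); split.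
    + exists x, k, m; split => //; split => // n Hn Hd'. apply: Hkm; by exists n.
    + rewrite (d_refl Hd). exact: RinvN_pos.
  - move=> L [HL1 HL2].
    have Hb : forall O, List.In O L -> exists n0, forall n, (n0 <= n)%N -> ~ O (u n).
    { move=> O HO. case: (HL1 O HO) => l [k [m [_ [Hm ->]]]]. exists m.+1 => n Hn. exact: Hm. }
    case: (list_bound Hb) => B HB. case: (HL2 (u B) (Hu B)) => O [HO Ou].
    exact: (HB O HO B (leqnn _) Ou).
Qed.

Lemma qp_surj (T : Top) (Rel : T -> T -> Prop) (c : quot_carrier Rel) :
  exists t, quot_proj Rel t = c.
Proof.
  case: c => S HS. case: (HS) => t Et. exists t. rewrite /quot_proj.
  by apply: subset_eq_compat.
Qed.

Lemma qp_eq (T : Top) (Rel : T -> T -> Prop) a b :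
  quot_proj Rel a = quot_proj Rel b <-> clos_refl_sym_trans T Rel a b.
Proof.
  split.
  - move=> E. have : proj1_sig (quot_proj Rel b) b by apply: rst_refl.
    rewrite -E /= => H. exact: H.
  - move=> H. rewrite /quot_proj.
    have E : clos_refl_sym_trans T Rel a = clos_refl_sym_trans T Rel b.
    { apply: functional_extensionality => t; apply: propositional_extensionality; split => Ht.
      - apply: rst_trans Ht. by apply: rst_sym.
      - exact: rst_trans H Ht. }
    by apply: subset_eq_compat.
Qed.

Lemma qp_conv (T : Top) (Rel : T -> T -> Prop) (u : nat -> T) l :
  converges u l -> converges (T := quotTop Rel) (fun n => quot_proj Rel (u n)) (quot_proj Rel l).
Proof. move=> Hc O HO Ol. exact: Hc _ HO Ol. Qed.


Unset Implicit Arguments.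
Section Atl.
Variables (X : Top) (N : nat) (F : 'I_N -> X -> Prop) (U E : {set 'I_N} -> Top)
  (pr : forall I : {set 'I_N}, E I -> U I) (z s : forall I : {set 'I_N}, U I -> E I) (psi : forall I : {set 'I_N}, U I -> X)
  (UIJ : forall I J : {set 'I_N}, U I -> Prop) (phi : forall I J : {set 'I_N}, U I -> U J)
  (Phi : forall I J : {set 'I_N}, E I -> E J) (EE : forall I J : {set 'I_N}, E J -> Prop)
  (V C : forall I : {set 'I_N}, U I -> Prop) (sigma : forall I : {set 'I_N}, U I -> E I).

Set Implicit Arguments.
Local Notation IK := (inIK X N F).
Local Notation eqK := (equivK X N F U UIJ phi).
Local Notation stK := (stepK X N F U UIJ phi).
Local Notation pt := ({I : {set 'I_N} & U I}).

Hypothesis Hchart : forall I : {set 'I_N}, IK I -> is_top_chart (pr I) (z I) (s I) (psi I) (footprint X N F I).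
Hypothesis HUII : forall I x, UIJ I I x.
Hypothesis HphiII : forall I x, phi I I x = x.
Hypothesis Hcc : forall I J : {set 'I_N}, IK I -> IK J -> I \proper J ->
  is_coord_change X N F U E pr z s psi UIJ phi Phi I J.
Hypothesis Hcoc : forall I J K : {set 'I_N}, IK I -> IK J -> IK K -> I \proper J -> J \proper K ->
     (forall e, UIJ I J (pr I e) -> UIJ J K (phi I J (pr I e)) -> UIJ I K (pr I e) ->
        Phi J K (Phi I J e) = Phi I K e) /\
     (forall x, UIJ I J x -> UIJ J K (phi I J x) -> UIJ I K x).
Hypothesis HEEcl : forall I J : {set 'I_N}, IK J -> I \subset J -> isClosed (EE I J).
Hypothesis HEEim : forall I J : {set 'I_N}, IK I -> IK J -> I \proper J ->
  forall u, UIJ I J u -> EE I J (s J (phi I J u)).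
Hypothesis Htame1 : forall I J K : {set 'I_N}, IK I -> IK J -> IK K -> I \subset J -> I \subset K ->
     forall x, (UIJ I J x /\ UIJ I K x) <-> (IK (J :|: K) /\ UIJ I (J :|: K) x).
Hypothesis Htame2 : forall I J K : {set 'I_N}, IK I -> IK J -> IK K -> I \subset J -> J \subset K ->
     forall y, (exists x, UIJ I K x /\ phi I J x = y) <-> (UIJ J K y /\ EE I J (s J y)).
Hypothesis HredV2 : forall I J : {set 'I_N}, IK I -> IK J -> forall x y,
     closure (V I) x -> closure (V J) y -> eqK (existT _ I x) (existT _ J y) ->
     I \subset J \/ J \subset I.
Hypothesis HVopen : forall I : {set 'I_N}, IK I -> isOpen (V I).
Hypothesis HVrc : forall I : {set 'I_N}, IK I -> rel_compact (V I) (fun _ => True).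
Hypothesis HCV : forall I : {set 'I_N}, IK I -> rel_compact (C I) (V I).
Hypothesis Hsig : forall I : {set 'I_N}, IK I -> continuous_on (V I) (sigma I) /\
                       forall x, V I x -> pr I (sigma I x) = x.
Hypothesis Hsigc : forall I J : {set 'I_N}, IK I -> IK J -> I \proper J ->
     forall x, V I x -> UIJ I J x -> V J (phi I J x) ->
       Phi I J (sigma I x) = sigma J (phi I J x).
Hypothesis Hsig0 : forall I : {set 'I_N}, IK I -> forall x, V I x -> sigma I x = z I x ->
     exists J c, IK J /\ C J c /\ eqK (existT _ I x) (existT _ J c).

Lemma metU (I : {set 'I_N}) : IK I -> metrizable (U I).
Proof. by move=> /Hchart [_ [_ [_ [H _]]]]. Qed.
Lemma metE (I : {set 'I_N}) : IK I -> metrizable (E I).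
Proof. by move=> /Hchart [_ [_ [_ [_ [_ [_ [H _]]]]]]]. Qed.
Lemma cont_z (I : {set 'I_N}) : IK I -> continuous (z I).
Proof. by move=> /Hchart [_ [_ [_ [_ [_ [_ [_ [_ [H _]]]]]]]]]. Qed.
Lemma pr_z (I : {set 'I_N}) x : IK I -> pr I (z I x) = x.
Proof. by move=> /Hchart [_ [_ [_ [_ [_ [_ [_ [_ [_ [H _]]]]]]]]]]. Qed.
Lemma cont_s (I : {set 'I_N}) : IK I -> continuous (s I).
Proof. by move=> /Hchart [_ [_ [_ [_ [_ [_ [_ [_ [_ [_ [H _]]]]]]]]]]]. Qed.

Lemma hausU (I : {set 'I_N}) : IK I -> hausdorff (U I).
Proof. move=> /metU [d Hd]. exact: (metric_hausdorff Hd). Qed.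
Lemma hausE (I : {set 'I_N}) : IK I -> hausdorff (E I).
Proof. move=> /metE [d Hd]. exact: (metric_hausdorff Hd). Qed.

Section CC.
Variables (I J : {set 'I_N}) (HI : IK I) (HJ : IK J) (HIJ : I \proper J).
Lemma cc_open : isOpen (UIJ I J).
Proof. by case: (Hcc HI HJ HIJ). Qed.
Lemma cc_Phi_emb : embedding_on (fun e => UIJ I J (pr I e)) (Phi I J).
Proof. by case: (Hcc HI HJ HIJ) => [_ [_ [H _]]]. Qed.
Lemma cc_phi_emb : embedding_on (UIJ I J) (phi I J).
Proof. by case: (Hcc HI HJ HIJ) => [_ [_ [_ [H _]]]]. Qed.
Lemma cc_z x : UIJ I J x -> z J (phi I J x) = Phi I J (z I x).
Proof. by case: (Hcc HI HJ HIJ) => [_ [_ [_ [_ [_ [H _]]]]]] /H. Qed.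
End CC.

Lemma closure_sub (T : Top) (A : T -> Prop) x : A x -> closure A x.
Proof. move=> Ax O _ Ox. by exists x. Qed.

Lemma IK_sub (I K : {set 'I_N}) : IK K -> I \subset K -> I != set0 -> IK I.
Proof.
  move=> [_ [x Hx]] HIK HI. split => //. exists x => i Hi. apply: Hx. exact: (subsetP HIK).
Qed.

Lemma IK_U (I J : {set 'I_N}) : IK I -> IK (I :|: J) -> IK (I :|: J).
Proof. by []. Qed.

Lemma phi_inj (I J : {set 'I_N}) x y : IK I -> IK J -> I \subset J -> UIJ I J x -> UIJ I J y ->
  phi I J x = phi I J y -> x = y.
Proof.
  move=> HI HJ HIJ Hx Hy Eq.
  case: (eqVneq I J) => [e|ne].
  - subst J. by rewrite !HphiII in Eq.
  - have Hp : I \proper J by rewrite properEneq ne.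
    by case: (cc_phi_emb HI HJ Hp) => [_ [Hinj _]]; apply: Hinj.
Qed.

Lemma comp (I J K : {set 'I_N}) x : IK I -> IK J -> IK K -> I \subset J -> J \subset K ->
  UIJ I J x -> UIJ J K (phi I J x) -> UIJ I K x /\ phi I K x = phi J K (phi I J x).
Proof.
  move=> HI HJ HK HIJ HJK Hx Hy.
  case: (eqVneq I J) => [e|ne1]; first by subst J; rewrite HphiII in Hy *.
  case: (eqVneq J K) => [e|ne2]; first by subst K; rewrite HphiII.
  have p1 : I \proper J by rewrite properEneq ne1.
  have p2 : J \proper K by rewrite properEneq ne2.
  have p3 : I \proper K := proper_trans p1 p2.
  case: (Hcoc HI HJ HK p1 p2) => H1 H2.
  have HxK := H2 x Hx Hy. split => //.
  have Eq := H1 (z I x). rewrite !pr_z // in Eq. have {}Eq := Eq Hx Hy HxK.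
  rewrite -(cc_z HI HJ p1 Hx) -(cc_z HJ HK p2 Hy) -(cc_z HI HK p3 HxK) in Eq.
  have := f_equal (pr K) Eq. by rewrite !pr_z.
Qed.

Lemma mono (I J K : {set 'I_N}) x : IK I -> IK J -> IK K -> I \subset J -> J \subset K ->
  UIJ I K x -> UIJ I J x.
Proof.
  move=> HI HJ HK HIJ HJK Hx.
  have := Htame1 HI HJ HK HIJ (subset_trans HIJ HJK) x.
  rewrite (setUidPr HJK). by case=> _ /(_ (conj HK Hx)) [].
Qed.

Lemma t2 (I J K : {set 'I_N}) x : IK I -> IK J -> IK K -> I \subset J -> J \subset K ->
  UIJ I K x -> UIJ J K (phi I J x).
Proof.
  move=> HI HJ HK HIJ HJK Hx.
  by case: (Htame2 HI HJ HK HIJ HJK (phi I J x)) => /(_ (ex_intro _ x (conj Hx erefl))) [].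
Qed.

Lemma uni (I J K : {set 'I_N}) x : IK I -> IK J -> IK K -> I \subset J -> I \subset K ->
  UIJ I J x -> UIJ I K x -> IK (J :|: K) /\ UIJ I (J :|: K) x.
Proof. move=> HI HJ HK HIJ HIK H1 H2. by case: (Htame1 HI HJ HK HIJ HIK x) => /(_ (conj H1 H2)). Qed.


Ltac ssub := let i := fresh "i" in apply/subsetP => i; rewrite !inE;
  repeat (let h := fresh in case/orP => h; try (rewrite h ?orbT //)); try (move=> ->; rewrite ?orbT //).

Definition Rel (a b : pt) : Prop := a = b \/
  match a, b with existT I0 x, existT J0 y =>
    IK I0 /\ IK J0 /\ IK (I0 :|: J0) /\ UIJ I0 (I0 :|: J0) x /\ UIJ J0 (I0 :|: J0) y /\
    phi I0 (I0 :|: J0) x = phi J0 (I0 :|: J0) y end.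

Lemma step_Rel a b : stK a b -> Rel a b.
Proof.
  case: a => I x; case: b => J y /= [HI [HJ [HIJ [Hx Hy]]]]. right.
  rewrite (setUidPr HIJ). do 5 (split => //). by rewrite HphiII.
Qed.

Lemma Rel_sym a b : Rel a b -> Rel b a.
Proof.
  case=> [->|]; first by left.
  case: a => I x; case: b => J y /= [HI [HJ [Hu [Hx [Hy Eq]]]]]. right.
  rewrite setUC. by do 5 (split => //).
Qed.

Lemma IK_ne I : IK I -> I != set0.
Proof. by case. Qed.

Lemma Rel_trans a b c : Rel a b -> Rel b c -> Rel a c.
Proof.
  case=> [->|Hab] //. case=> [<-|Hbc]; first by right.
  right. move: Hab Hbc.
  case: a => I x; case: b => J y; case: c => K w /=.
  move=> [HI [HJ [HIJ [HxIJ [HyIJ Eab]]]]] [_ [HK [HJK [HyJK [HwJK Ebc]]]]].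
  set IJ := I :|: J in HIJ HxIJ HyIJ Eab *. set JK := J :|: K in HJK HyJK HwJK Ebc *.
  have sJIJ : J \subset IJ by rewrite /IJ; ssub.
  have sIIJ : I \subset IJ by rewrite /IJ; ssub.
  have sJJK : J \subset JK by rewrite /JK; ssub.
  have sKJK : K \subset JK by rewrite /JK; ssub.
  set L := IJ :|: JK.
  have sIJL : IJ \subset L by rewrite /L; ssub.
  have sJKL : JK \subset L by rewrite /L; ssub.
  case: (uni HJ HIJ HJK sJIJ sJJK HyIJ HyJK) => HL HyL.
  have Hv := t2 HJ HIJ HL sJIJ sIJL HyL.
  have Hv' := t2 HJ HJK HL sJJK sJKL HyL.
  have [HxL Ex] : UIJ I L x /\ phi I L x = phi IJ L (phi I IJ x).
  { apply: comp => //. by rewrite Eab. }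
  have [_ Ey] := comp HJ HIJ HL sJIJ sIJL HyIJ Hv.
  have [HwL Ew] : UIJ K L w /\ phi K L w = phi JK L (phi K JK w).
  { apply: comp => //. by rewrite -Ebc. }
  have [_ Ey'] := comp HJ HJK HL sJJK sJKL HyJK Hv'.
  have Eq : phi I L x = phi K L w by rewrite Ex Ew Eab -Ebc -Ey -Ey'.
  have sIKL : I :|: K \subset L by rewrite /L /IJ /JK; ssub.
  have HIK : IK (I :|: K).
  { apply: IK_sub HL sIKL _. apply/set0Pn. case/set0Pn: (IK_ne HI) => i Hi.
    exists i; by rewrite inE Hi. }
  have sIIK : I \subset I :|: K by ssub.
  have sKIK : K \subset I :|: K by ssub.
  have Hx1 := mono HI HIK HL sIIK sIKL HxL.
  have Hw1 := mono HK HIK HL sKIK sIKL HwL.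
  have Hx2 := t2 HI HIK HL sIIK sIKL HxL.
  have Hw2 := t2 HK HIK HL sKIK sIKL HwL.
  have [_ Ex2] := comp HI HIK HL sIIK sIKL Hx1 Hx2.
  have [_ Ew2] := comp HK HIK HL sKIK sIKL Hw1 Hw2.
  do 5 (split => //).
  apply: (phi_inj HIK HL sIKL Hx2 Hw2). by rewrite -Ex2 -Ew2.
Qed.

Lemma equivK_Rel a b : eqK a b -> Rel a b.
Proof.
  elim=> [p q|p|p q _ IH|p q r _ IH1 _ IH2].
  - exact: step_Rel.
  - by left.
  - exact: Rel_sym.
  - exact: Rel_trans IH1 IH2.
Qed.

Definition Dir (a b : pt) := stK a b \/ stK b a.

Lemma stK_refl (I : {set 'I_N}) x : IK I -> stK (existT _ I x) (existT _ I x).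
Proof. move=> HI /=. by rewrite HphiII. Qed.

Lemma Dir_V (I J : {set 'I_N}) x y : IK I -> IK J -> closure (V I) x -> closure (V J) y ->
  eqK (existT _ I x) (existT _ J y) -> Dir (existT _ I x) (existT _ J y).
Proof.
  move=> HI HJ Hx Hy He.
  case: (equivK_Rel He) => [Eq|].
  - left. rewrite -Eq. exact: stK_refl.
  - move=> [_ [_ [Hu [Hx' [Hy' Eq]]]]].
    case: (HredV2 HI HJ Hx Hy He) => Hs.
    + left. rewrite (setUidPr Hs) in Hx' Hy' Eq Hu. rewrite HphiII in Eq. by do 4 (split => //).
    + right. rewrite (setUidPl Hs) in Hx' Hy' Eq Hu. rewrite HphiII in Eq. by do 4 (split => //).
Qed.

Lemma Dir_fix (M K : {set 'I_N}) y y' : IK M -> IK K -> M \subset K ->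
  closure (V M) y -> closure (V K) y' -> eqK (existT _ M y) (existT _ K y') ->
  UIJ M K y /\ phi M K y = y'.
Proof.
  move=> HM HK HMK Hy Hy' He.
  case: (Dir_V HM HK Hy Hy' He) => /= [[_ [_ [_ H]]]|[_ [_ [HKM [_ Eq]]]]] //.
  have e : M = K by apply/eqP; rewrite eqEsubset HMK HKM.
  subst K. rewrite HphiII in Eq; rewrite HphiII; split; [exact: HUII|by []].
Qed.


Local Notation ZT := (ZTop X N F U E z V sigma).
Local Notation RelZ := (fun a b : ZT => stK (proj1_sig a) (proj1_sig b)).
Local Notation qp := (quot_proj RelZ).

Lemma Zclos_eqK (a b : ZT) : clos_refl_sym_trans ZT RelZ a b -> eqK (proj1_sig a) (proj1_sig b).
Proof.
  elim=> [p q H|p|p q _ IH|p q r _ IH1 _ IH2].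
  - exact: rst_step.
  - exact: rst_refl.
  - exact: rst_sym.
  - exact: rst_trans IH1 IH2.
Qed.

Lemma Z_V (a : ZT) : closure (V (projT1 (proj1_sig a))) (projT2 (proj1_sig a)) /\ IK (projT1 (proj1_sig a)).
Proof. case: a => [[I x] H] /=. case: H => HI [Hx _]. split => //. exact: closure_sub. Qed.

Lemma qpZ_eq (a b : ZT) : qp a = qp b <-> Dir (proj1_sig a) (proj1_sig b).
Proof.
  split.
  - move=> /qp_eq /Zclos_eqK. case: a => [[I x] Ha]; case: b => [[J y] Hb] /=.
    case: Ha => HI [Hx _]; case: Hb => HJ [Hy _].
    apply: Dir_V => //; exact: closure_sub.
  - move=> H; apply/qp_eq. case: H => H; [exact: rst_step|apply: rst_sym; exact: rst_step].
Qed.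

Lemma zero_transfer (a : ZT) (J : {set 'I_N}) (y : U J) : IK J -> V J y ->
  Dir (proj1_sig a) (existT _ J y) -> sigma J y = z J y.
Proof.
  case: a => [[I x] Ha] /= HJ Vy. case: Ha => HI [Vx Zx].
  case=> /= [[_ [_ [HIJ [Hx Eq]]]]|[_ [_ [HJI [Hy Eq]]]]].
  - subst y. case: (eqVneq I J) => [e|ne].
    + subst J. by rewrite HphiII.
    + have p : I \proper J by rewrite properEneq ne.
      rewrite -(Hsigc HI HJ p Vx Hx Vy) Zx (cc_z HI HJ p Hx) //.
  - case: (eqVneq J I) => [e|ne].
    + subst J. rewrite HphiII in Eq. by subst y.
    + have p : J \proper I by rewrite properEneq ne.
      have Vy' : V I (phi J I y) by rewrite Eq.
      have E1 := Hsigc HJ HI p Vy Hy Vy'. rewrite Eq Zx -Eq (cc_z HJ HI p Hy) in E1.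
      case: (cc_Phi_emb HJ HI p) => [_ [Hinj _]]. apply: Hinj E1.
      * by rewrite (proj2 (Hsig HJ)).
      * by rewrite pr_z.
Qed.

Lemma dU_ex (M : {set 'I_N}) : exists d : U M -> U M -> R, IK M -> is_metric d.
Proof.
  case: (classic (IK M)) => [HM|HM].
  - case: (metU HM) => d Hd. by exists d.
  - by exists (fun _ _ => 0%R).
Qed.

Definition dU (M : {set 'I_N}) := proj1_sig (constructive_indefinite_description _ (dU_ex M)).
Arguments dU M : clear implicits.

Lemma dU_met (M : {set 'I_N}) : IK M -> is_metric (dU M).
Proof. rewrite /dU; case: constructive_indefinite_description => /= d Hd; exact: Hd. Qed.

Lemma GC (M K : {set 'I_N}) (yn : nat -> U M) p q : IK M -> IK K -> M \subset K ->
  (forall n, UIJ M K (yn n)) -> converges yn p -> converges (fun n => phi M K (yn n)) q ->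
  UIJ M K p /\ phi M K p = q.
Proof.
  move=> HM HK HMK Hy Hp Hq.
  case: (eqVneq M K) => [e|ne].
  - subst K. rewrite HphiII. split => //. apply: conv_unique (hausU HM) Hp _.
    have -> : yn = (fun n => phi M M (yn n)) by apply: functional_extensionality => n; rewrite HphiII.
    exact: Hq.
  - have pMK : M \proper K by rewrite properEneq ne.
    have HEq : EE M K (s K q).
    { apply: (closed_lim (cont_s HK) (HEEcl HK HMK) Hq) => n. exact: HEEim. }
    case: (Htame2 HM HK HK HMK (subxx K) q) => _ /(_ (conj (HUII q) HEq)) [x' [Hx' Ex']].
    have Hc : converges yn x'.
    { move=> W HW Wx'. case: (cc_phi_emb HM HK pMK) => [_ [_ H3]].
      case: (H3 W HW) => O [HO HWO].
      have Oq : O q by rewrite -Ex'; apply/HWO.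
      case: (Hq O HO Oq) => n0 Hn0. exists n0 => n Hn. apply/HWO => //. exact: Hn0. }
    have <- : x' = p by apply: conv_unique (hausU HM) Hc Hp.
    by split.
Qed.

Definition vr (a : pt) (M : {set 'I_N}) (v : U M) := IK M /\ eqK a (existT _ M v).
Arguments vr a M v : clear implicits.

Lemma eqK_sym a b : eqK a b -> eqK b a. Proof. exact: rst_sym. Qed.
Lemma eqK_trans a b c : eqK a b -> eqK b c -> eqK a c. Proof. exact: rst_trans. Qed.

Lemma vr_uniq a (M : {set 'I_N}) v v' : vr a M v -> vr a M v' -> v = v'.
Proof.
  move=> [HM H1] [_ H2]. have := equivK_Rel (eqK_trans (eqK_sym H1) H2).
  case=> [e|].
  - exact: (inj_pair2_eq_dec _ (@eq_comparable _) _ _ _ _ e).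
  - rewrite setUid !HphiII. by case=> _ [_ [_ [_ [_ ->]]]].
Qed.

Lemma vr_step a (M K : {set 'I_N}) v : vr a M v -> IK K -> M \subset K -> UIJ M K v ->
  vr a K (phi M K v).
Proof.
  move=> [HM H] HK HMK Hv. split => //. apply: eqK_trans H _. apply: rst_step => /=.
  by do 4 (split => //).
Qed.

Lemma inv_le (n m : nat) : (n <= m)%N -> (/ (INR m + 1) <= / (INR n + 1))%R.
Proof.
  move=> H. apply: Rinv_le_contravar; first by have := pos_INR n; lra.
  have : (n <= m)%coq_nat by apply/leP. move/le_INR. lra.
Qed.

Lemma Loc1 a (M K : {set 'I_N}) eK : IK M -> IK K -> M \proper K -> (0 < eK)%R ->
  exists del, (0 < del)%R /\ forall y v, vr a M v -> (dU M v y < del)%R -> V M y ->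
    UIJ M K y -> V K (phi M K y) -> exists v', vr a K v' /\ (dU K v' (phi M K y) < eK)%R.
Proof.
  move=> HM HK pMK HeK. have HMK := proper_sub pMK.
  case: (classic (exists v, vr a M v)) => [[v0 Hv0]|Hno]; last first.
  { exists 1%R; split; first lra. move=> y v Hv. by case: Hno; exists v. }
  case: (classic (exists v', vr a K v')) => [[v1 Hv1]|Hno].
  - have [Hv0K Ev0] : UIJ M K v0 /\ phi M K v0 = v1.
    { case: Hv0 => _ H0. case: Hv1 => _ H1.
      case: (equivK_Rel (eqK_trans (eqK_sym H0) H1)) => [e|].
      - exfalso. have := f_equal (@projT1 _ _) e => /= e'. move: pMK. by rewrite e' properxx.
      - move=> [_ [_ [_ [Ha [_ Hb]]]]]. rewrite (setUidPr HMK) in Ha Hb.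
        by rewrite HphiII in Hb. }
    case: (cc_phi_emb HM HK pMK) => [Hcont _].
    case: (Hcont _ (ball_open (dU_met HK) v1 eK)) => W [HW HWe].
    have Wv0 : W v0 by apply/HWe => //; rewrite -Ev0 (d_refl (dU_met HK)).
    case: (open_ball (dU_met HM) HW Wv0) => del [Hdel Hb].
    exists del; split => // y v Hv Hd _ Hy _. exists v1; split => //.
    apply/HWe => //. apply: Hb. by rewrite -(vr_uniq Hv Hv0).
  - suff [del [Hdel Hb]] : exists del, (0 < del)%R /\ forall y, (dU M v0 y < del)%R ->
        UIJ M K y -> V K (phi M K y) -> False.
    { exists del; split => // y v Hv Hd _ Hy HVy. exfalso. apply: (Hb y) => //.
      by rewrite -(vr_uniq Hv Hv0). }
    apply: NNPP => Hn.
    have Hs : forall n, exists y, (dU M v0 y < / (INR n + 1))%R /\ UIJ M K y /\ V K (phi M K y).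
    { move=> n. apply: NNPP => Hn'. apply: Hn. exists (/ (INR n + 1))%R; split; first exact: RinvN_pos.
      move=> y H1 H2 H3. apply: Hn'. by exists y. }
    pose yn n := proj1_sig (constructive_indefinite_description _ (Hs n)).
    have Hyn n : (dU M v0 (yn n) < / (INR n + 1))%R /\ UIJ M K (yn n) /\ V K (phi M K (yn n)).
    { rewrite /yn; case: constructive_indefinite_description => /= y Hy; exact: Hy. }
    case: (compact_seq (K := fun x => True /\ closure (V K) x) (u := fun n => phi M K (yn n))
             (dU_met HK) (proj2 (HVrc HK))) => [n|g [q [Hg [_ Hq]]]].
    { split => //. apply: closure_sub. exact: (proj2 (proj2 (Hyn n))). }
    have Hc : converges (fun n => yn (g n)) v0.
    { apply: (conv_metric (dU_met HM)) => n. apply: Rlt_le_trans (proj1 (Hyn (g n))) _.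
      apply: inv_le. exact: incr_ge. }
    case: (GC HM HK HMK (fun n => proj1 (proj2 (Hyn (g n)))) Hc Hq) => HU _.
    apply: Hno. exists (phi M K v0). exact: vr_step.
Qed.


Lemma fin_min (T : finType) (P : T -> R -> Prop) :
  (forall k d d', P k d -> (0 < d')%R -> (d' <= d)%R -> P k d') ->
  (forall k, exists d, (0 < d)%R /\ P k d) -> exists d, (0 < d)%R /\ forall k, P k d.
Proof.
  move=> Hmon H.
  suff [d [Hd Hl]] : exists d, (0 < d)%R /\ forall k, k \in enum T -> P k d.
  { exists d; split => // k. apply: Hl. by rewrite mem_enum. }
  elim: (enum T) => [|a l [d1 [Hd1 IH]]]; first by exists 1%R; split => //; lra.
  case: (H a) => d2 [Hd2 Ha]. exists (Rmin d1 d2); split; first exact: Rmin_pos.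
  move=> k; rewrite in_cons => /orP [/eqP ->|Hk].
  - apply: Hmon Ha _ _; [exact: Rmin_pos|exact: Rmin_r].
  - apply: Hmon (IH k Hk) _ _; [exact: Rmin_pos|exact: Rmin_l].
Qed.

Lemma LocAll a (eps : {set 'I_N} -> R) : (forall K, (0 < eps K)%R) -> forall M : {set 'I_N},
  exists del, (0 < del)%R /\ forall (K : {set 'I_N}) y v, IK M -> IK K -> M \proper K ->
    vr a M v -> (dU M v y < del)%R -> V M y ->
    UIJ M K y -> V K (phi M K y) -> exists v', vr a K v' /\ (dU K v' (phi M K y) < eps K)%R.
Proof.
  move=> Hpos M.
  pose P (K : {set 'I_N}) del := forall y v, IK M -> IK K -> M \proper K ->
    vr a M v -> (dU M v y < del)%R -> V M y ->
    UIJ M K y -> V K (phi M K y) -> exists v', vr a K v' /\ (dU K v' (phi M K y) < eps K)%R.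
  case: (@fin_min _ P) => [K d d' Hd Hd' Hle y v H1 H2 H3 H4 H5|K|d [Hd HP]].
  - apply: (Hd y v H1 H2 H3 H4). lra.
  - case: (classic (IK M /\ IK K /\ M \proper K)) => [[HM [HK p]]|Hn].
    + case: (Loc1 a HM HK p (Hpos K)) => d [Hd Hl]. exists d; split => // y v _ _ _. exact: Hl.
    + exists 1%R; split; first lra. move=> y v HM HK p. by case: Hn.
  - by exists d; split => // K; apply: HP.
Qed.

Definition GoodFrom a (eps : {set 'I_N} -> R) (k : nat) := forall (M K : {set 'I_N}) y v,
  (k <= #|M|)%N -> IK M -> IK K -> M \subset K -> vr a M v -> (dU M v y < eps M)%R -> V M y ->
  UIJ M K y -> V K (phi M K y) -> exists v', vr a K v' /\ (dU K v' (phi M K y) < eps K)%R.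

Lemma good_ex a d0 : (0 < d0)%R -> exists eps : {set 'I_N} -> R,
  (forall M, (0 < eps M)%R /\ (eps M <= d0)%R) /\ GoodFrom a eps 0.
Proof.
  move=> Hd0.
  suff H : forall j k, j + k = N.+1 -> exists eps : {set 'I_N} -> R,
    (forall M, (0 < eps M)%R /\ (eps M <= d0)%R) /\ GoodFrom a eps k.
  { exact: (H N.+1 0 (addn0 _)). }
  elim=> [|j IH] k Hjk.
  - exists (fun _ => d0); split; first by move=> M; split => //; lra.
    move=> M K y v Hk. exfalso. rewrite add0n in Hjk. rewrite Hjk in Hk.
    have := max_card (mem M). rewrite card_ord => H2. have := leq_trans Hk H2. by rewrite ltnn.
  - have Hjk' : j + k.+1 = N.+1 by rewrite addnS -addSn.
    case: (IH _ Hjk') => eps [Hb Hg].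
    have Hpos : forall K, (0 < eps K)%R by move=> K; case: (Hb K).
    pose del M := proj1_sig (constructive_indefinite_description _ (LocAll a Hpos M)).
    have Hdel M : (0 < del M)%R /\ forall (K : {set 'I_N}) y v, IK M -> IK K -> M \proper K ->
      vr a M v -> (dU M v y < del M)%R -> V M y ->
      UIJ M K y -> V K (phi M K y) -> exists v', vr a K v' /\ (dU K v' (phi M K y) < eps K)%R.
    { rewrite /del; case: constructive_indefinite_description => /= d Hd; exact: Hd. }
    pose eps' (M : {set 'I_N}) := if #|M| == k then Rmin (eps M) (del M) else eps M.
    exists eps'; split.
    + move=> M. rewrite /eps'. case: (Hb M) => H1 H2. case: ifP => _; last by split.
      split; first by apply: Rmin_pos => //; case: (Hdel M).
      apply: Rle_trans (Rmin_l _ _) H2.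
    + move=> M K y v Hk HM HK HMK Hv Hd Vy Hy VKy.
      case: (eqVneq M K) => [e|ne].
      * subst K. exists v; split => //. by rewrite HphiII.
      * have p : M \proper K by rewrite properEneq ne.
        have cMK := proper_card p.
        have eK : eps' K = eps K.
        { rewrite /eps'. case: ifP => // /eqP e. exfalso. rewrite e in cMK. move: cMK Hk.
          move=> H1 H2. have := leq_ltn_trans H2 H1. by rewrite ltnn. }
        rewrite eK. move: Hd. rewrite /eps'. case: ifP => [_ Hd|/negbT Hne Hd].
        -- apply: (proj2 (Hdel M) K y v) => //. apply: Rlt_le_trans Hd _. exact: Rmin_r.
        -- apply: (Hg M K y v) => //. rewrite ltn_neqAle Hk andbT eq_sym. exact: Hne.
Qed.

Definition Tset a (eps : {set 'I_N} -> R) (p : pt) : Prop :=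
  match p with existT L0 x => IK L0 /\ exists (M : {set 'I_N}) v,
    L0 \subset M /\ IK M /\ UIJ L0 M x /\ V M (phi L0 M x) /\ vr a M v /\
    (dU M v (phi L0 M x) < eps M)%R end.

Lemma T_open a eps : @isOpen ZT (fun t => Tset a eps (proj1_sig t)).
Proof.
  exists (Tset a eps); split; last by [].
  move=> L /=.
  case: (classic (IK L)) => [HL|HL]; last first.
  { apply: open_ext (open_empty _) _ => x; split => //. by case. }
  pose Fam (O : U L -> Prop) := exists (M : {set 'I_N}) v, O = fun x =>
    L \subset M /\ IK M /\ UIJ L M x /\ V M (phi L M x) /\ vr a M v /\
    (dU M v (phi L M x) < eps M)%R.
  apply: open_ext (open_union (Fam := Fam) _) _.
  - move=> O [M [v ->]].
    case: (classic (L \subset M /\ IK M /\ vr a M v)) => [[LM [HM Hv]]|Hn]; last first.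
    { apply: open_ext (open_empty _) _ => x; split => //. move=> [H1 [H2 [_ [_ [H3 _]]]]]. by case: Hn. }
    case: (eqVneq L M) => [e|ne].
    + subst M. apply: open_ext (open_inter (HVopen HL) (ball_open (dU_met HL) v (eps L))) _.
      move=> x. rewrite HphiII. split; first by move=> [H1 H2]; do 5 (split => //).
      by move=> [_ [_ [_ [H1 [_ H2]]]]].
    + have p : L \proper M by rewrite properEneq ne.
      case: (cc_phi_emb HL HM p) => [Hcont _].
      case: (Hcont _ (open_inter (HVopen HM) (ball_open (dU_met HM) v (eps M)))) => W [HW HWe].
      apply: open_ext (open_inter (cc_open HL HM p) HW) _ => x. split.
      * move=> [Hx Wx]. have [H1 H2] := (proj2 (HWe x Hx) Wx). by do 5 (split => //).
      * move=> [_ [_ [Hx [H1 [_ H2]]]]]. split => //. exact/(HWe x Hx).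
  - move=> x. split.
    + move=> [O [[M [v ->]] H]]. split => //. by exists M, v.
    + move=> [_ [M [v H]]]. exists (fun x =>
        L \subset M /\ IK M /\ UIJ L M x /\ V M (phi L M x) /\ vr a M v /\
        (dU M v (phi L M x) < eps M)%R); split => //. by exists M, v.
Qed.

Lemma T_sat a eps (t t' : ZT) : GoodFrom a eps 0 ->
  Dir (proj1_sig t) (proj1_sig t') -> Tset a eps (proj1_sig t) -> Tset a eps (proj1_sig t').
Proof.
  move=> Hg.
  case: t => [[L x] Ht]; case: t' => [[K w] Ht'] /=.
  case: Ht => HL [Vx Zx]; case: Ht' => HK [Vw Zw].
  move=> HD [_ [M [v [LM [HM [Hx [VMy [Hv Hd]]]]]]]]. split => //.
  case: HD => /= [[_ [_ [LK [HxK Ew]]]]|[_ [_ [KL [HwL Ex]]]]].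
  - have He : eqK (existT _ K w) (existT _ M (phi L M x)).
    { have e1 : eqK (existT _ L x) (existT _ K w).
      { apply: rst_step. rewrite /= -Ew. by do 4 (split => //). }
      have e2 : eqK (existT _ L x) (existT _ M (phi L M x)).
      { apply: rst_step. by do 4 (split => //). }
      exact: eqK_trans (eqK_sym e1) e2. }
    case: (Dir_V HK HM (closure_sub Vw) (closure_sub VMy) He)
      => /= [[_ [_ [KM [HwM Ew']]]]|[_ [_ [MK [HyK Ey]]]]].
    + exists M, v. rewrite Ew'. by do 5 (split => //).
    + have VKy : V K (phi M K (phi L M x)) by rewrite Ey.
      case: (Hg M K (phi L M x) v (leq0n _) HM HK MK Hv Hd VMy HyK VKy) => v' [Hv' Hd'].
      exists K, v'. rewrite HphiII. split => //. split => //. split; first exact: HUII.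
      split => //. split => //. by rewrite -Ey.
  - subst x. have [HwM Ecomp] := comp HK HL HM KL LM HwL Hx.
    exists M, v. rewrite Ecomp. split; first exact: subset_trans KL LM. by do 4 (split => //).
Qed.

Lemma T_contains (t : ZT) eps : (forall M, (0 < eps M)%R) -> Tset (proj1_sig t) eps (proj1_sig t).
Proof.
  move=> Hpos. case: t => [[L x] Ht] /=. case: Ht => HL [Vx Zx]. split => //.
  exists L, x. rewrite HphiII. do 4 (split => //). split; first by split => //; exact: rst_refl.
  rewrite (d_refl (dU_met HL)). exact: Hpos.
Qed.


Lemma conv_vr (M : {set 'I_N}) (yn : nat -> U M) v (g : nat -> nat) : IK M -> incr g ->
  (forall n, (dU M v (yn n) < / (INR (g n) + 1))%R) -> converges yn v.
Proof.
  move=> HM Hg H. apply: (conv_metric (dU_met HM)) => n. apply: Rlt_le_trans (H n) _.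
  apply: inv_le. exact: incr_ge.
Qed.

Definition SP a b (n : nat) (MK : {set 'I_N} * {set 'I_N}) : Prop :=
  exists yy : U MK.1 * U MK.2, exists v v',
    vr a MK.1 v /\ vr b MK.2 v' /\ V MK.1 yy.1 /\ V MK.2 yy.2 /\
    (dU MK.1 v yy.1 < / (INR n + 1))%R /\ (dU MK.2 v' yy.2 < / (INR n + 1))%R /\
    eqK (existT _ MK.1 yy.1) (existT _ MK.2 yy.2) /\ IK MK.1 /\ IK MK.2.

Lemma SP_contra a b (M K : {set 'I_N}) (g : nat -> nat) : incr g ->
  (forall n, SP a b (g n) (M, K)) -> eqK a b.
Proof.
  move=> Hg H.
  pose yy n := proj1_sig (constructive_indefinite_description _ (H n)).
  have Hyy n : exists v v', vr a M v /\ vr b K v' /\ V M (yy n).1 /\ V K (yy n).2 /\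
    (dU M v (yy n).1 < / (INR (g n) + 1))%R /\ (dU K v' (yy n).2 < / (INR (g n) + 1))%R /\
    eqK (existT _ M (yy n).1) (existT _ K (yy n).2) /\ IK M /\ IK K.
  { rewrite /yy; case: constructive_indefinite_description => /= p Hp; exact: Hp. }
  case: (Hyy 0) => v0 [v0' [Hv0 [Hv0' [_ [_ [_ [_ [_ [HM HK]]]]]]]]].
  have Hd n : (dU M v0 (yy n).1 < / (INR (g n) + 1))%R /\ (dU K v0' (yy n).2 < / (INR (g n) + 1))%R
     /\ V M (yy n).1 /\ V K (yy n).2 /\ eqK (existT _ M (yy n).1) (existT _ K (yy n).2).
  { case: (Hyy n) => v [v' [Hv [Hv' [H1 [H2 [H3 [H4 [H5 _]]]]]]]].
    rewrite (vr_uniq Hv0 Hv) (vr_uniq Hv0' Hv'). by do 4 (split => //). }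
  have C1 : converges (fun n => (yy n).1) v0 by apply: (conv_vr HM Hg) => n; case: (Hd n).
  have C2 : converges (fun n => (yy n).2) v0' by apply: (conv_vr HK Hg) => n; case: (Hd n) => _ [].
  case: (Hd 0) => _ [_ [V1 [V2 He0]]].
  case: (HredV2 HM HK (closure_sub V1) (closure_sub V2) He0) => Hs.
  - have Hf n : UIJ M K (yy n).1 /\ phi M K (yy n).1 = (yy n).2.
    { case: (Hd n) => _ [_ [W1 [W2 He]]]. exact: (Dir_fix HM HK Hs (closure_sub W1) (closure_sub W2) He). }
    have C2' : converges (fun n => phi M K (yy n).1) v0'.
    { have -> : (fun n => phi M K (yy n).1) = (fun n => (yy n).2)
        by apply: functional_extensionality => n; case: (Hf n).
      exact: C2. }
    case: (GC HM HK Hs (fun n => proj1 (Hf n)) C1 C2') => HU Eq.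
    have := vr_step Hv0 HK Hs HU. rewrite Eq => [[_ H1]].
    exact: eqK_trans H1 (eqK_sym (proj2 Hv0')).
  - have Hf n : UIJ K M (yy n).2 /\ phi K M (yy n).2 = (yy n).1.
    { case: (Hd n) => _ [_ [W1 [W2 He]]].
      exact: (Dir_fix HK HM Hs (closure_sub W2) (closure_sub W1) (eqK_sym He)). }
    have C1' : converges (fun n => phi K M (yy n).2) v0.
    { have -> : (fun n => phi K M (yy n).2) = (fun n => (yy n).1)
        by apply: functional_extensionality => n; case: (Hf n).
      exact: C1. }
    case: (GC HK HM Hs (fun n => proj1 (Hf n)) C2 C1') => HU Eq.
    have := vr_step Hv0' HM Hs HU. rewrite Eq => [[_ H1]].
    exact: eqK_sym (eqK_trans H1 (eqK_sym (proj2 Hv0))).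
Qed.

Lemma ZeqK_Dir (a b : ZT) : eqK (proj1_sig a) (proj1_sig b) -> Dir (proj1_sig a) (proj1_sig b).
Proof.
  case: a => [[I x] Ha]; case: b => [[J y] Hb] /= Hab.
  case: Ha => HI [Vx _]; case: Hb => HJ [Vy _].
  exact: Dir_V HI HJ (closure_sub Vx) (closure_sub Vy) Hab.
Qed.

Lemma Sep (a b : ZT) : ~ Dir (proj1_sig a) (proj1_sig b) ->
  exists ea eb, GoodFrom (proj1_sig a) ea 0 /\ GoodFrom (proj1_sig b) eb 0 /\
    (forall M, (0 < ea M)%R) /\ (forall M, (0 < eb M)%R) /\
    forall t : ZT, Tset (proj1_sig a) ea (proj1_sig t) -> Tset (proj1_sig b) eb (proj1_sig t) -> False.
Proof.
  move=> HnD.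
  have Hex c n : exists eps : {set 'I_N} -> R,
     (forall M, (0 < eps M)%R /\ (eps M <= / (INR n + 1))%R) /\ GoodFrom c eps 0.
  { apply: good_ex. exact: RinvN_pos. }
  pose ep c n := proj1_sig (constructive_indefinite_description _ (Hex c n)).
  have Hep c n : (forall M, (0 < ep c n M)%R /\ (ep c n M <= / (INR n + 1))%R) /\ GoodFrom c (ep c n) 0.
  { rewrite /ep; case: constructive_indefinite_description => /= e He; exact: He. }
  case: (classic (exists n, forall t : ZT, Tset (proj1_sig a) (ep (proj1_sig a) n) (proj1_sig t) ->
            Tset (proj1_sig b) (ep (proj1_sig b) n) (proj1_sig t) -> False)) => [[n Hn]|Hno].
  { exists (ep (proj1_sig a) n), (ep (proj1_sig b) n).
    case: (Hep (proj1_sig a) n) => Ha1 Ha2. case: (Hep (proj1_sig b) n) => Hb1 Hb2.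
    do 2 (split => //). split; first by move=> M; case: (Ha1 M).
    split; first by move=> M; case: (Hb1 M). exact: Hn. }
  exfalso. apply: HnD.
  have Hall : forall n, exists MK, SP (proj1_sig a) (proj1_sig b) n MK.
  { move=> n. apply: NNPP => Hn. apply: Hno. exists n => t Ta Tb. apply: Hn.
    case: t Ta Tb => [[L x] Ht] /=. case: Ht => HL _.
    move=> [_ [M [v [LM [HM [Hx [VMy [Hv Hd]]]]]]]] [_ [K [v' [LK [HK [Hx' [VKy [Hv' Hd']]]]]]]].
    exists (M, K), (phi L M x, phi L K x), v, v' => /=.
    do 4 (split => //). split.
    { apply: Rlt_le_trans Hd _. by case: (proj1 (Hep (proj1_sig a) n) M). }
    split.
    { apply: Rlt_le_trans Hd' _. by case: (proj1 (Hep (proj1_sig b) n) K). }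
    split => //.
    have e1 : eqK (existT _ L x) (existT _ M (phi L M x)) by apply: rst_step; do 4 (split => //).
    have e2 : eqK (existT _ L x) (existT _ K (phi L K x)) by apply: rst_step; do 4 (split => //).
    exact: eqK_trans (eqK_sym e1) e2. }
  case: (pigeon Hall) => [[M K] [g [Hg HP]]].
  exact: ZeqK_Dir (SP_contra Hg HP).
Qed.

Lemma Z_hausdorff : hausdorff (quotTop RelZ).
Proof.
  move=> c1 c2 Hne.
  case: (qp_surj c1) => a Ea; case: (qp_surj c2) => b Eb. subst c1 c2.
  have HnD : ~ Dir (proj1_sig a) (proj1_sig b) by move/qpZ_eq.
  case: (Sep HnD) => ea [eb [Ga [Gb [Pa [Pb Hdis]]]]].
  exists (fun c => exists t : ZT, Tset (proj1_sig a) ea (proj1_sig t) /\ qp t = c).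
  exists (fun c => exists t : ZT, Tset (proj1_sig b) eb (proj1_sig t) /\ qp t = c).
  have Hop c e : GoodFrom c e 0 ->
    @isOpen (quotTop RelZ) (fun c0 => exists t : ZT, Tset c e (proj1_sig t) /\ qp t = c0).
  { move=> Gc. apply: open_ext (T_open c e) _ => t. split.
    - move=> Ht. by exists t.
    - move=> [t' [Ht' Eq]]. apply: T_sat Gc _ Ht'. exact/qpZ_eq. }
  split; first exact: Hop. split; first exact: Hop.
  split; first by exists a; split => //; exact: T_contains.
  split; first by exists b; split => //; exact: T_contains.
  move=> c [t1 [T1 E1]] [t2 [T2 E2]].
  apply: (Hdis t2) => //. apply: T_sat Ga _ T1. apply/qpZ_eq. by rewrite E1 E2.
Qed.

Lemma convZ (J : {set 'I_N}) (cs : nat -> U J) p (Hc : forall n, inZ X N F U E z V sigma (existT _ J (cs n)))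
  (Hp : inZ X N F U E z V sigma (existT _ J p)) :
  converges cs p -> converges (T := ZT) (fun n => exist _ (existT _ J (cs n)) (Hc n)) (exist _ (existT _ J p) Hp).
Proof.
  move=> Hcv O [O' [HO' HOE]] Op.
  have Hs : O' (existT _ J p) by apply/(HOE (exist _ _ Hp)).
  case: (Hcv _ (HO' J) Hs) => n0 Hn0. exists n0 => n Hn. apply/HOE. exact: Hn0.
Qed.

Definition CP (u : nat -> quotTop RelZ) (n : nat) (J : {set 'I_N}) : Prop :=
  exists tc : ZT * U J, qp tc.1 = u n /\ IK J /\ C J tc.2 /\ eqK (proj1_sig tc.1) (existT _ J tc.2).

Lemma Z_seqcompact : seq_compact (quotTop RelZ).
Proof.
  move=> u.
  have Hall : forall n, exists J, CP u n J.
  { move=> n. case: (qp_surj (u n)) => t Et.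
    case: t Et => [[I x] Ht] Et. case: (Ht) => HI [Vx Zx].
    case: (Hsig0 HI Vx Zx) => J [c [HJ [Cc He]]].
    exists J, (exist _ (existT _ I x) Ht, c). by do 3 (split => //). }
  case: (pigeon Hall) => J [g1 [Hg1 HP]].
  pose tc n := proj1_sig (constructive_indefinite_description _ (HP n)).
  have Htc n : qp (tc n).1 = u (g1 n) /\ IK J /\ C J (tc n).2 /\
     eqK (proj1_sig (tc n).1) (existT _ J (tc n).2).
  { rewrite /tc; case: constructive_indefinite_description => /= p Hp; exact: Hp. }
  have HJ : IK J by case: (Htc 0) => _ [].
  have HCVJ := HCV HJ.
  have HVc n : V J (tc n).2 by apply: (proj1 HCVJ); case: (Htc n) => _ [_ []].
  have HDir n : Dir (proj1_sig (tc n).1) (existT _ J (tc n).2).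
  { case: (Htc n) => _ [_ [_ He]]. move: He. case: (tc n).1 => [[I x] Ht] /= He.
    case: Ht => HI [Vx _]. exact: Dir_V HI HJ (closure_sub Vx) (closure_sub (HVc n)) He. }
  have HZc n : inZ X N F U E z V sigma (existT _ J (tc n).2).
  { split => //. split; first exact: HVc. exact: (zero_transfer HJ (HVc n) (HDir n)). }
  case: (compact_seq (K := fun x => V J x /\ closure (C J) x) (u := fun n => (tc n).2)
           (dU_met HJ) (proj2 HCVJ)) => [n|g2 [p [Hg2 [[Vp _] Hcv]]]].
  { split; first exact: HVc. apply: closure_sub. by case: (Htc n) => _ [_ []]. }
  have Zp : sigma J p = z J p.
  { apply: NNPP => Hne. case: (hausE HJ Hne) => O1 [O2 [HO1 [HO2 [H1 [H2 Hdis]]]]].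
    case: (proj1 (Hsig HJ) _ HO1) => W [HW HWe].
    have Wp : W p by apply/HWe.
    case: (Hcv _ (open_inter HW (cont_z HJ HO2)) (conj Wp H2)) => n0 Hn0.
    case: (Hn0 n0 (leqnn _)) => Wn Zn.
    apply: (Hdis (z J (tc (g2 n0)).2)) => //.
    rewrite -(proj2 (proj2 (HZc (g2 n0)))). apply/HWe => //. }
  have HZp : inZ X N F U E z V sigma (existT _ J p) by split => //.
  exists (fun n => g1 (g2 n)), (qp (exist _ _ HZp)). split; first exact: incr_comp.
  have -> : (fun n => u (g1 (g2 n))) = (fun n => qp (exist _ (existT _ J (tc (g2 n)).2) (HZc (g2 n)))).
  { apply: functional_extensionality => n. case: (Htc (g2 n)) => <- _.
    apply/qpZ_eq. exact: HDir. }
  apply: qp_conv. exact: (convZ (cs := fun n => (tc (g2 n)).2)).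
Qed.

End Atl.

Unset Implicit Arguments.

Theorem mainTheorem18 (X : Top) (N : nat) (F : 'I_N -> X -> Prop)
  (U E : {set 'I_N} -> Top)
  (pr : forall I, E I -> U I) (z s : forall I, U I -> E I) (psi : forall I, U I -> X)
  (UIJ : forall I J : {set 'I_N}, U I -> Prop) (phi : forall I J, U I -> U J)
  (Phi : forall I J, E I -> E J) (EE : forall I J : {set 'I_N}, E J -> Prop)
  (V C : forall I, U I -> Prop) (sigma : forall I, U I -> E I) :
  compact (fun _ : X => True) -> metrizable X ->
  is_tame_top_atlas X N F U E pr z s psi UIJ phi Phi EE ->
  is_nested_reduction X N F U E z s UIJ phi C V ->
  is_admissible_section X N F U E pr z UIJ phi Phi V C sigma ->
  hausdorff (ZquotTop X N F U E z UIJ phi V sigma) /\ seq_compact (ZquotTop X N F U E z UIJ phi V sigma).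
Proof.
  move=> _ _ [[_ [_ [Hchart [HUII [HphiII [Hcc Hcoc]]]]]] [[HEEcl [_ [_ [_ [_ Hiv]]]]] [Ht1 Ht2]]].
  move=> [_ [[HVi [HV2 _]] HCV]] [Hsig [Hsigc Hsig0]].
  have HEEim : forall I J : {set 'I_N}, inIK X N F I -> inIK X N F J -> I \proper J ->
      forall u, UIJ I J u -> EE I J (s J (phi I J u)).
  { move=> I J HI HJ p. exact: (proj1 (Hiv I J HI HJ p)). }
  have HVopen : forall I : {set 'I_N}, inIK X N F I -> isOpen (V I).
  { move=> I HI. exact: (proj1 (HVi I HI)). }
  have HVrc : forall I : {set 'I_N}, inIK X N F I -> rel_compact (V I) (fun _ => True).
  { move=> I HI. exact: (proj1 (proj2 (HVi I HI))). }
  split.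
  - eapply Z_hausdorff; eassumption.
  - eapply Z_seqcompact; eassumption.
Qed.
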